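(* Let $d_2,a_2,h,q>0$, $0<x_2\le L$, and let $\bar w$ be the unique positive solution of $d_2w''-a_2w'+h-qw=0$ on $(0,x_2)$ with $d_2w'(0)-a_2w(0)=0$ and $d_2w'(x_2)-a_2w(x_2)=0$. Then: (i) $0<\bar w_x<\frac{a_2}{d_2}\bar w$ in $(0,x_2)$; (ii) $\bar w$ is strictly increasing with respect to $h$; (iii) $\lim_{h\to0}\bar w=0$ and $\lim_{h\to+\infty}\bar w=+\infty$ uniformly on $[0,x_2]$; (iv) $\bar w$ is strictly decreasing with respect to $q$; (v) $\lim_{q\to0}\bar w=+\infty$ and $\lim_{q\to+\infty}\bar w=0$ uniformly on $[0,x_2]$.
   Context: Monotonicity with respect to a parameter means that, for each fixed $x$ in $(0,x_2)$, $\bar w(x)$ is strictly monotone as a function of that parameter with all other parameters fixed. *)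

(* Defs.v *)
From Stdlib Require Import Reals.
From Coquelicot Require Import Coquelicot.
Open Scope R_scope.

(* w is a positive classical solution on [0,x2] of
     d w'' - a w' + h - q w = 0 in (0,x2),
     d w'(0) - a w(0) = 0,  d w'(x2) - a w(x2) = 0.
   w is a function R -> R; only its values on [0,x2] matter.
   w is differentiable at every point of [0,x2] (so w' exists up to the
   boundary), twice differentiable in (0,x2). *)
Definition is_pos_sol (d a h q x2 : R) (w : R -> R) : Prop :=
  (forall x, 0 <= x <= x2 -> ex_derive w x) /\
  (forall x, 0 < x < x2 -> ex_derive (Derive w) x) /\
  (forall x, 0 < x < x2 ->
      d * Derive (Derive w) x - a * Derive w x + h - q * w x = 0) /\
  d * Derive w 0 - a * w 0 = 0 /\
  d * Derive w x2 - a * w x2 = 0 /\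
  (forall x, 0 <= x <= x2 -> 0 < w x).

(* Main.v *)
Require Import Defs.
From Stdlib Require Import Reals Lra Psatz.
From Coquelicot Require Import Coquelicot.
Open Scope R_scope.

Lemma dpl_of (f : R -> R) x l : is_derive f x l -> derivable_pt_lim f x l.
Proof. intro H; now apply is_derive_Reals. Qed.

Lemma cont_of (f : R -> R) x l : is_derive f x l -> continuity_pt f x.
Proof.
  intro H. apply derivable_continuous_pt. exists l. now apply is_derive_Reals.
Qed.

Lemma mvt (f f' : R -> R) a b : a < b ->
  (forall c, a <= c <= b -> is_derive f c (f' c)) ->
  exists c, f b - f a = f' c * (b - a) /\ a < c < b.
Proof.
  intros Hab H. apply MVT_cor2; auto. intros c Hc. apply dpl_of, H; auto.
Qed.

Lemma const_open (f : R -> R) al be :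
  (forall x, al < x < be -> is_derive f x 0) ->
  forall x y, al < x < be -> al < y < be -> f x = f y.
Proof.
  intros H x y Hx Hy.
  destruct (Rtotal_order x y) as [Hl|[He|Hl]].
  - destruct (mvt f (fun _ => 0) x y Hl) as [c [Hc _]].
    + intros c Hc; apply H; lra.
    + lra.
  - now subst.
  - destruct (mvt f (fun _ => 0) y x Hl) as [c [Hc _]].
    + intros c Hc; apply H; lra.
    + lra.
Qed.

Lemma cont_nbhd (f : R -> R) m : continuity_pt f m -> f m < 0 ->
  exists del, 0 < del /\ forall y, Rabs (y - m) < del -> f y < 0.
Proof.
  intros Hc Hm.
  destruct (Hc (- f m)) as [al [Hal Hy]]; [lra|].
  exists al; split; auto. intros y Hym.
  destruct (Req_dec y m) as [->|Hne]; [lra|].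
  assert (H := Hy y). simpl in H. unfold R_dist in H.
  assert (Rabs (f y - f m) < - f m) by (apply H; split; [split; [exact I| auto] | auto]).
  apply Rabs_def2 in H0. lra.
Qed.

Lemma small_zero x : (forall eps, 0 < eps -> Rabs x < eps) -> x = 0.
Proof.
  intro H. destruct (Req_dec x 0) as [|Hn]; auto.
  assert (Hp : 0 < Rabs x) by (apply Rabs_pos_lt; auto).
  specialize (H _ Hp). lra.
Qed.

Lemma zero_side (g : R -> R) p s del : s * s = 1 -> 0 < del -> ex_derive g p ->
  (forall hh, 0 < hh < del -> g (p + s * hh) = 0) ->
  g p = 0 /\ Derive g p = 0.
Proof.
  intros Hs Hdel Hex Hz.
  assert (Hd := Derive_correct g p Hex).
  set (l := Derive g p) in *.
  assert (Hc := cont_of g p l Hd).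
  assert (Hs' : Rabs s = 1).
  { destruct (Rle_dec 0 s).
    - rewrite Rabs_right; nra.
    - rewrite Rabs_left; nra. }
  assert (Hg : g p = 0).
  { apply small_zero. intros eps Heps.
    destruct (Hc eps Heps) as [al [Hal Hy]].
    set (t := Rmin al del / 2).
    assert (Ht : 0 < t) by (unfold t; apply Rmin_case; lra).
    assert (Ht2 : t < al /\ t < del) by (unfold t; split; apply Rmin_case_strong; intros; lra).
    specialize (Hy (p + s * t)). simpl in Hy. unfold R_dist in Hy.
    rewrite Hz in Hy by lra.
    replace (g p) with (- (0 - g p)) by ring. rewrite Rabs_Ropp.
    assert (Hst : s * t <> 0) by (intro H0; apply Rmult_integral in H0; destruct H0; nra).
    apply Hy. split; [split; [exact I| intro He; apply Hst; lra]|].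
    replace (p + s * t - p) with (s * t) by ring. rewrite Rabs_mult, Hs', Rabs_right; lra. }
  split; auto.
  apply dpl_of in Hd.
  apply small_zero. intros eps Heps.
  destruct (Hd eps Heps) as [al Hal].
  set (t := Rmin al del / 2).
  assert (Ht : 0 < t) by (unfold t; apply Rmin_case; destruct al; simpl; lra).
  assert (Ht2 : t < al /\ t < del) by (unfold t; split; apply Rmin_case_strong; intros; destruct al; simpl in *; lra).
  specialize (Hal (s * t)).
  rewrite Hz, Hg in Hal by lra.
  assert (Hne : s * t <> 0) by (intro H0; apply Rmult_integral in H0; destruct H0; nra).
  replace ((0 - 0) / (s * t) - l) with (- l) in Hal by (unfold Rdiv; ring).
  rewrite Rabs_Ropp in Hal. apply Hal; auto.
  rewrite Rabs_mult, Hs', Rabs_right; lra.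
Qed.

Lemma exp_convex t y : 0 < t < 1 -> y <> 0 -> exp (t * y) < 1 - t + t * exp y.
Proof.
  intros Ht Hy.
  assert (E1 : exp y = exp (t * y) * exp ((1 - t) * y)) by (rewrite <- exp_plus; f_equal; ring).
  assert (E2 : 1 = exp (t * y) * exp (- (t * y))) by (rewrite <- exp_plus; replace (t*y + - (t*y)) with 0 by ring; now rewrite exp_0).
  assert (P := exp_pos (t * y)).
  assert (Hu : 1 + (1 - t) * y <= exp ((1 - t) * y)) by apply exp_ineq1_le.
  assert (Hv : 1 + - (t * y) <= exp (- (t * y))) by apply exp_ineq1_le.
  assert (A1 : 0 <= (1 - t) * exp (t * y) * (exp (- (t * y)) - (1 + - (t * y)))).
  { apply Rmult_le_pos; [apply Rmult_le_pos|]; lra. }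
  assert (A2 : 0 <= t * exp (t * y) * (exp ((1 - t) * y) - (1 + (1 - t) * y))).
  { apply Rmult_le_pos; [apply Rmult_le_pos|]; lra. }
  destruct (Rlt_dec 0 y).
  - assert (H1 : 1 + (1 - t) * y < exp ((1 - t) * y)) by (apply exp_ineq1; nra).
    assert (A3 : 0 < t * exp (t * y) * (exp ((1 - t) * y) - (1 + (1 - t) * y))).
    { apply Rmult_lt_0_compat; [apply Rmult_lt_0_compat|]; lra. }
    rewrite E1. pattern 1 at 1. rewrite E2. nra.
  - assert (H1 : 1 + - (t * y) < exp (- (t * y))) by (apply exp_ineq1; nra).
    assert (A3 : 0 < (1 - t) * exp (t * y) * (exp (- (t * y)) - (1 + - (t * y)))).
    { apply Rmult_lt_0_compat; [apply Rmult_lt_0_compat|]; lra. }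
    rewrite E1. pattern 1 at 1. rewrite E2. nra.
Qed.
Lemma der_expmul (F F1 : R -> R) c y : is_derive F y (F1 y) ->
  is_derive (fun x => exp (c * x) * F x) y (exp (c * y) * c * F y + exp (c * y) * F1 y).
Proof.
  intro H. auto_derive.
  - exists (F1 y); auto.
  - replace (Derive (fun x : R => F x) y) with (F1 y) by (symmetry; apply is_derive_unique; auto). ring.
Qed.

Lemma minprin (Z Zd G Gd : R -> R) x2 : 0 < x2 ->
  (forall x, is_derive Z x (Zd x)) ->
  (forall x, is_derive G x (Gd x)) ->
  (forall x, continuity_pt Gd x) ->
  (forall x, (G x < 0 -> Zd x < 0) /\ (0 < G x -> 0 < Zd x)) ->
  G 0 = 0 -> G x2 = 0 ->
  (forall x, 0 <= x <= x2 -> Z x <= 0 -> Gd x < 0) ->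
  forall x, 0 <= x <= x2 -> 0 < Z x.
Proof.
  intros Hx2 HZ HG HGc Hsg HG0 HG1 Hneg.
  destruct (continuity_ab_min Z 0 x2) as [m [Hm Hmr]]; [lra| intros c _; apply (cont_of _ _ _ (HZ c))|].
  intros x Hx.
  destruct (Rlt_dec 0 (Z m)) as [Hp|Hn].
  { specialize (Hm x Hx); lra. }
  exfalso. apply Rnot_lt_le in Hn.
  assert (Hgm := Hneg m Hmr Hn).
  destruct (cont_nbhd Gd m (HGc m) Hgm) as [del [Hdel Hnb]].
  assert (Right : m < x2 -> G m <= 0 -> False).
  { intros Hm2 Gm.
    set (t := Rmin (del / 2) (x2 - m)).
    assert (Ht : 0 < t) by (unfold t; apply Rmin_case; lra).
    assert (Ht2 : t <= del / 2 /\ t <= x2 - m) by (unfold t; split; [apply Rmin_l|apply Rmin_r]).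
    destruct (mvt Z Zd m (m + t)) as [c [Hc Hcr]]; [lra| intros; apply HZ|].
    assert (G c < 0).
    { destruct (mvt G Gd m c) as [c' [Hc' Hc'r]]; [lra| intros; apply HG|].
      assert (Gd c' < 0) by (apply Hnb; rewrite Rabs_right; lra).
      nra. }
    assert (Zd c < 0) by (apply Hsg; auto).
    assert (Z m <= Z (m + t)) by (apply Hm; lra).
    nra. }
  assert (Left : 0 < m -> 0 <= G m -> False).
  { intros Hm2 Gm.
    set (t := Rmin (del / 2) m).
    assert (Ht : 0 < t) by (unfold t; apply Rmin_case; lra).
    assert (Ht2 : t <= del / 2 /\ t <= m) by (unfold t; split; [apply Rmin_l|apply Rmin_r]).
    destruct (mvt Z Zd (m - t) m) as [c [Hc Hcr]]; [lra| intros; apply HZ|].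
    assert (0 < G c).
    { destruct (mvt G Gd c m) as [c' [Hc' Hc'r]]; [lra| intros; apply HG|].
      assert (Gd c' < 0) by (apply Hnb; rewrite Rabs_left; lra).
      nra. }
    assert (0 < Zd c) by (apply Hsg; auto).
    assert (Z m <= Z (m - t)) by (apply Hm; lra).
    nra. }
  destruct (Rlt_dec m x2) as [Hlt|Hge].
  - destruct (Rle_dec (G m) 0) as [Gl|Gg]; [now apply Right|].
    destruct (Rlt_dec 0 m) as [Hm0|Hm0]; [apply Left; lra|].
    assert (m = 0) by lra. subst m. lra.
  - assert (m = x2) by lra. subst m. apply Left; lra.
Qed.

Definition rr1 d a q := (a + sqrt (a*a + 4*d*q)) / (2*d).
Definition rr2 d a q := (a - sqrt (a*a + 4*d*q)) / (2*d).
Definition Ac d a h q x2 := a*(h/q)*(1 - exp (rr2 d a q * x2)) /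
   (- d * rr2 d a q * (exp (rr1 d a q * x2) - exp (rr2 d a q * x2))).
Definition Bc d a h q x2 := - (a*(h/q)*(exp (rr1 d a q * x2) - 1) /
   (d * rr1 d a q * (exp (rr1 d a q * x2) - exp (rr2 d a q * x2)))).
Definition Fs d a h q x2 x := h/q + Ac d a h q x2 * exp (rr1 d a q * x) + Bc d a h q x2 * exp (rr2 d a q * x).
Definition Fs1 d a h q x2 x := Ac d a h q x2 * rr1 d a q * exp (rr1 d a q * x) + Bc d a h q x2 * rr2 d a q * exp (rr2 d a q * x).
Definition Fs2 d a h q x2 x := Ac d a h q x2 * (rr1 d a q * rr1 d a q) * exp (rr1 d a q * x) + Bc d a h q x2 * (rr2 d a q * rr2 d a q) * exp (rr2 d a q * x).

Lemma roots d a q : 0 < d -> 0 < a -> 0 < q ->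
  rr1 d a q + rr2 d a q = a / d /\ rr1 d a q * rr2 d a q = - q / d /\
  0 < rr1 d a q /\ rr2 d a q < 0.
Proof.
  intros Hd Ha Hq. unfold rr1, rr2.
  assert (H0 : 0 <= a*a + 4*d*q) by nra.
  assert (Hs := sqrt_sqrt _ H0).
  assert (Hp := sqrt_pos (a*a + 4*d*q)).
  set (s := sqrt (a*a + 4*d*q)) in *.
  assert (Hsa : a < s) by nra.
  repeat split.
  - field; lra.
  - unfold Rdiv. replace ((a + s) * / (2 * d) * ((a - s) * / (2 * d))) with ((a*a - s*s) / (4*d*d)) by (field; lra). rewrite Hs. field; lra.
  - apply Rdiv_lt_0_compat; lra.
  - apply Rmult_lt_reg_r with (2*d); [lra|]. unfold Rdiv. rewrite Rmult_assoc, Rinv_l; lra.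
Qed.

Lemma Fs_der d a h q x2 x : is_derive (Fs d a h q x2) x (Fs1 d a h q x2 x).
Proof. unfold Fs, Fs1. auto_derive; auto. ring. Qed.

Lemma Fs1_der d a h q x2 x : is_derive (Fs1 d a h q x2) x (Fs2 d a h q x2 x).
Proof. unfold Fs1, Fs2. auto_derive; auto. ring. Qed.

Lemma Fs_ode d a h q x2 x : 0 < d -> 0 < a -> 0 < q ->
  d * Fs2 d a h q x2 x - a * Fs1 d a h q x2 x + h - q * Fs d a h q x2 x = 0.
Proof.
  intros Hd Ha Hq. destruct (roots d a q) as [S [P _]]; auto.
  unfold Fs, Fs1, Fs2.
  set (r1 := rr1 d a q) in *. set (r2 := rr2 d a q) in *.
  set (A := Ac d a h q x2). set (B := Bc d a h q x2).
  clearbody r1 r2 A B.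
  assert (a = d * (r1 + r2)) by (rewrite S; field; lra).
  assert (q = - (d * (r1 * r2))) by (replace (r1*r2) with (-q/d) by auto; field; lra).
  subst a q. field. repeat split; intro; subst; lra.
Qed.

Lemma bc_gen d a k r1 r2 x2 A B : 0 < d -> 0 < x2 -> r1 + r2 = a / d -> 0 < r1 -> r2 < 0 ->
  A = a*k*(1 - exp (r2 * x2)) / (- d * r2 * (exp (r1 * x2) - exp (r2 * x2))) ->
  B = - (a*k*(exp (r1 * x2) - 1) / (d * r1 * (exp (r1 * x2) - exp (r2 * x2)))) ->
  d * (A * r1 + B * r2) - a * (k + A + B) = 0 /\
  d * (A * r1 * exp (r1 * x2) + B * r2 * exp (r2 * x2)) - a * (k + A * exp (r1 * x2) + B * exp (r2 * x2)) = 0.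
Proof.
  intros Hd Hx S H1 H2 HA HB.
  assert (E1 : 1 < exp (r1 * x2)) by (rewrite <- exp_0; apply exp_increasing; nra).
  assert (E2 : exp (r2 * x2) < 1) by (rewrite <- exp_0; apply exp_increasing; nra).
  set (e1 := exp (r1 * x2)) in *. set (e2 := exp (r2 * x2)) in *. clearbody e1 e2.
  assert (a = d * (r1 + r2)) by (rewrite S; field; lra). subst a B A.
  split; field; repeat split; lra.
Qed.

Lemma uniq_gen d a k r1 r2 x2 A B : 0 < d -> 0 < x2 -> r1 + r2 = a / d -> 0 < r1 -> r2 < 0 ->
  d * (A * r1 + B * r2) - a * (k + A + B) = 0 ->
  d * (A * r1 * exp (r1 * x2) + B * r2 * exp (r2 * x2)) - a * (k + A * exp (r1 * x2) + B * exp (r2 * x2)) = 0 ->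
  A = a*k*(1 - exp (r2 * x2)) / (- d * r2 * (exp (r1 * x2) - exp (r2 * x2))) /\
  B = - (a*k*(exp (r1 * x2) - 1) / (d * r1 * (exp (r1 * x2) - exp (r2 * x2)))).
Proof.
  intros Hd Hx S H1 H2 B0 B1.
  assert (E1 : 1 < exp (r1 * x2)) by (rewrite <- exp_0; apply exp_increasing; nra).
  assert (E2 : exp (r2 * x2) < 1) by (rewrite <- exp_0; apply exp_increasing; nra).
  set (e1 := exp (r1 * x2)) in *. set (e2 := exp (r2 * x2)) in *. clearbody e1 e2.
  assert (a = d * (r1 + r2)) by (rewrite S; field; lra). subst a.
  assert (HP : A * (- d * r2) * (e1 - e2) = d * (r1 + r2) * k * (1 - e2)) by nra.
  assert (HN : B * (- d * r1) * (e1 - e2) = d * (r1 + r2) * k * (e1 - 1)) by nra.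
  split.
  - apply (Rmult_eq_reg_r ((- d * r2) * (e1 - e2))); [|apply Rmult_integral_contrapositive; split; nra].
    rewrite <- Rmult_assoc, HP. field. split; nra.
  - apply (Rmult_eq_reg_r ((- d * r1) * (e1 - e2))); [|apply Rmult_integral_contrapositive; split; nra].
    rewrite <- Rmult_assoc, HN. field. split; nra.
Qed.


Lemma Fs_facts d a h q x2 : 0 < d -> 0 < a -> 0 < h -> 0 < q -> 0 < x2 ->
  0 < Ac d a h q x2 /\ Bc d a h q x2 < 0 /\
  d * Fs1 d a h q x2 0 - a * Fs d a h q x2 0 = 0 /\
  d * Fs1 d a h q x2 x2 - a * Fs d a h q x2 x2 = 0 /\
  (forall x, 0 < Fs1 d a h q x2 x) /\
  (forall x y, x <= y -> Fs d a h q x2 x <= Fs d a h q x2 y) /\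
  (forall x, 0 < x < x2 -> d * Fs1 d a h q x2 x - a * Fs d a h q x2 x < 0).
Proof.
  intros Hd Ha Hh Hq Hx.
  destruct (roots d a q) as [S [P [R1 R2]]]; auto.
  unfold Fs, Fs1.
  assert (HA := eq_refl (Ac d a h q x2)). assert (HB := eq_refl (Bc d a h q x2)).
  unfold Ac at 2 in HA. unfold Bc at 2 in HB.
  set (r1 := rr1 d a q) in *. set (r2 := rr2 d a q) in *.
  set (A := Ac d a h q x2) in *. set (B := Bc d a h q x2) in *.
  set (k := h / q) in *.
  assert (Hk : 0 < k) by (apply Rdiv_lt_0_compat; auto).
  clearbody r1 r2 A B.
  destruct (bc_gen d a k r1 r2 x2 A B) as [BC0 BC1]; auto.
  assert (E1 : 1 < exp (r1 * x2)) by (rewrite <- exp_0; apply exp_increasing; nra).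
  assert (E2 : exp (r2 * x2) < 1) by (rewrite <- exp_0; apply exp_increasing; nra).
  assert (E2p : 0 < exp (r2 * x2)) by apply exp_pos.
  assert (Apos : 0 < A).
  { rewrite HA. apply Rdiv_lt_0_compat.
    - apply Rmult_lt_0_compat; [nra|lra].
    - apply Rmult_lt_0_compat; nra. }
  assert (Bneg : B < 0).
  { rewrite HB. apply Ropp_lt_gt_0_contravar. apply Rdiv_lt_0_compat.
    - apply Rmult_lt_0_compat; [nra|lra].
    - apply Rmult_lt_0_compat; nra. }
  assert (Ea : a = d * (r1 + r2)) by (rewrite S; field; lra).
  do 2 (split; [auto|]).
  rewrite !Rmult_0_r, !exp_0, !Rmult_1_r.
  split; [exact BC0|].
  split; [exact BC1|].
  split.
  { intro x. assert (U1 := exp_pos (r1 * x)). assert (U2 := exp_pos (r2 * x)).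
    assert (0 < A * r1 * exp (r1 * x)) by (apply Rmult_lt_0_compat; nra).
    assert (0 < B * r2 * exp (r2 * x)) by (apply Rmult_lt_0_compat; nra).
    lra. }
  split.
  { intros x y Hxy.
    assert (exp (r1 * x) <= exp (r1 * y)) by (apply exp_le_3 || (destruct (Req_dec x y); [subst; lra| left; apply exp_increasing; nra])).
    assert (exp (r2 * y) <= exp (r2 * x)) by (destruct (Req_dec x y); [subst; lra| left; apply exp_increasing; nra]).
    nra. }
  intros x Hxr.
  set (t := x / x2).
  assert (Ht : 0 < t < 1).
  { unfold t; split; [apply Rdiv_lt_0_compat; lra|].
    apply Rmult_lt_reg_r with x2; auto. unfold Rdiv. rewrite Rmult_assoc, Rinv_l; lra. }
  assert (C1 : exp (r1 * x) < 1 - t + t * exp (r1 * x2)).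
  { replace (r1 * x) with (t * (r1 * x2)) by (unfold t; field; lra). apply exp_convex; nra. }
  assert (C2 : exp (r2 * x) < 1 - t + t * exp (r2 * x2)).
  { replace (r2 * x) with (t * (r2 * x2)) by (unfold t; field; lra). apply exp_convex; nra. }
  set (e1 := exp (r1 * x2)) in *. set (e2 := exp (r2 * x2)) in *.
  clearbody e1 e2. subst a.
  assert (P1 : 0 < A * (- d * r2)) by (apply Rmult_lt_0_compat; nra).
  assert (P2 : 0 < B * (- d * r1)) by (replace (B*(-d*r1)) with ((-B)*(d*r1)) by ring; apply Rmult_lt_0_compat; nra).
  assert (Q1 : A * (- d * r2) * exp (r1 * x) < A * (- d * r2) * (1 - t + t * e1)) by (apply Rmult_lt_compat_l; auto).
  assert (Q2 : B * (- d * r1) * exp (r2 * x) < B * (- d * r1) * (1 - t + t * e2)) by (apply Rmult_lt_compat_l; auto).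
  assert (H0' : A*(-d*r2) + B*(-d*r1) = d*(r1+r2)*k) by (apply Rminus_diag_uniq; rewrite <- BC0; ring).
  assert (H1' : A*(-d*r2)*e1 + B*(-d*r1)*e2 = d*(r1+r2)*k) by (apply Rminus_diag_uniq; rewrite <- BC1; ring).
  assert (Hsum : A*(-d*r2)*(1-t+t*e1) + B*(-d*r1)*(1-t+t*e2) = (1-t)*(A*(-d*r2) + B*(-d*r1)) + t*(A*(-d*r2)*e1 + B*(-d*r1)*e2)) by ring.
  rewrite H0', H1' in Hsum.
  replace (d * (A * r1 * exp (r1 * x) + B * r2 * exp (r2 * x)) - d * (r1 + r2) * (k + A * exp (r1 * x) + B * exp (r2 * x)))
    with (A*(-d*r2)*exp (r1 * x) + B*(-d*r1)*exp (r2 * x) - d*(r1+r2)*k) by ring.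
  lra.
Qed.

Lemma Fs_bounds d a h q x2 : 0 < d -> 0 < a -> 0 < h -> 0 < q -> 0 < x2 ->
  forall x, 0 <= x <= x2 ->
  h / q * exp (- (a / d * x2)) < Fs d a h q x2 x < h / q * exp (a / d * x2).
Proof.
  intros Hd Ha Hh Hq Hx x Hxr.
  destruct (Fs_facts d a h q x2) as [_ [_ [BC0 [BC1 [F1p [Mono Gneg]]]]]]; auto.
  set (F := Fs d a h q x2) in *. set (F1 := Fs1 d a h q x2) in *.
  assert (DF := Fs_der d a h q x2). assert (DF1 := Fs1_der d a h q x2).
  assert (ODE := fun x => Fs_ode d a h q x2 x Hd Ha Hq).
  fold F F1 in DF, DF1, ODE.
  set (F2 := Fs2 d a h q x2) in *.
  destruct (mvt (fun x => d * F1 x - a * F x) (fun x => d * F2 x - a * F1 x) 0 x2) as [xi [Hxi Hxir]]; auto.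
  { intros c _. apply (is_derive_minus (fun x => d * F1 x) (fun x => a * F x)); apply is_derive_scal; auto. }
  assert (Fxi : F xi = h / q).
  { specialize (ODE xi). cbv beta in Hxi. rewrite BC1, BC0, !Rminus_0_r in Hxi.
    symmetry in Hxi. apply Rmult_integral in Hxi. destruct Hxi as [H0|H0]; [|lra].
    replace (F xi) with ((q * F xi) / q) by (field; lra). replace (q * F xi) with h by lra. reflexivity. }
  destruct (mvt (fun x => exp (- (a / d) * x) * F x)
                (fun x => exp (- (a / d) * x) * (- (a / d)) * F x + exp (- (a / d) * x) * F1 x) 0 x2)
    as [c [Hc Hcr]]; auto.
  { intros y _. apply der_expmul; auto. }
  assert (Gc := Gneg c Hcr).
  assert (Ec := exp_pos (- (a / d) * c)).
  assert (Hz : exp (- (a / d) * c) * (- (a / d)) * F c + exp (- (a / d) * c) * F1 c < 0).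
  { replace (exp (- (a / d) * c) * (- (a / d)) * F c + exp (- (a / d) * c) * F1 c)
      with (exp (- (a / d) * c) / d * (d * F1 c - a * F c)) by (field; lra).
    assert (0 < exp (- (a / d) * c) / d) by (apply Rdiv_lt_0_compat; auto).
    nra. }
  rewrite Rmult_0_r, exp_0, Rmult_1_l in Hc.
  assert (Hlt : exp (- (a / d) * x2) * F x2 < F 0) by nra.
  assert (Hf0 : F 0 <= h / q) by (rewrite <- Fxi; apply Mono; lra).
  assert (Hf1 : h / q <= F x2) by (rewrite <- Fxi; apply Mono; lra).
  assert (Hm0 : F 0 <= F x) by (apply Mono; lra).
  assert (Hm1 : F x <= F x2) by (apply Mono; lra).
  assert (Ep : exp (- (a / d * x2)) * exp (a / d * x2) = 1).
  { rewrite <- exp_plus. replace (- (a / d * x2) + a / d * x2) with 0 by ring. apply exp_0. }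
  replace (- (a / d) * x2) with (- (a / d * x2)) in Hlt by ring.
  assert (P1 := exp_pos (- (a / d * x2))). assert (P2 := exp_pos (a / d * x2)).
  assert (T1 : 0 <= exp (- (a / d * x2)) * (F x2 - h / q)) by (apply Rmult_le_pos; lra).
  assert (T2 : 0 <= exp (a / d * x2) * (h / q - F 0)) by (apply Rmult_le_pos; lra).
  assert (T3 : 0 < exp (a / d * x2) * (F 0 - exp (- (a / d * x2)) * F x2)) by (apply Rmult_lt_0_compat; lra).
  assert (T4 : exp (a / d * x2) * (exp (- (a / d * x2)) * F x2) = F x2).
  { rewrite <- Rmult_assoc, (Rmult_comm (exp (a / d * x2))), Ep. ring. }
  split.
  - lra.
  - lra.
Qed.

Lemma rep_open d a h q x2 w : 0 < d -> 0 < a -> 0 < q -> 0 < x2 ->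
  is_pos_sol d a h q x2 w ->
  exists A0 B0, forall x, 0 < x < x2 ->
    w x = h / q + A0 * exp (rr1 d a q * x) + B0 * exp (rr2 d a q * x).
Proof.
  intros Hd Ha Hq Hx [Hd1 [Hd2 [Hode [HB0 [HB1 Hpos]]]]].
  destruct (roots d a q) as [S [P [R1 R2]]]; auto.
  set (r1 := rr1 d a q) in *. set (r2 := rr2 d a q) in *. clearbody r1 r2.
  set (k := h / q).
  assert (Ea : a = d * (r1 + r2)) by (rewrite S; field; lra).
  assert (Eq : q = - (d * (r1 * r2))) by (replace (r1*r2) with (-q/d) by auto; field; lra).
  set (V := fun x => (Derive w x - r2 * (w x - k)) * exp (- r1 * x)).
  assert (DV : forall x, 0 < x < x2 -> is_derive V x 0).
  { intros x Hxr. unfold V. auto_derive.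
    - split; [apply Hd2; auto|]. split; [apply Hd1; lra|]. auto.
    - specialize (Hode x Hxr).
      change (Derive (fun x0 : R => Derive w x0) x) with (Derive (Derive w) x).
      change (Derive (fun x0 : R => w x0) x) with (Derive w x).
      set (D2 := Derive (Derive w) x) in *. set (D1 := Derive w x) in *. set (W := w x) in *.
      assert (HD2 : D2 = (a * D1 - h + q * W) / d).
      { replace (a * D1 - h + q * W) with (d * D2) by lra. field. lra. }
      rewrite HD2. unfold k. rewrite Ea, Eq. field. split; [lra|]. split; lra. }
  set (C := V (x2 / 2)).
  assert (HV : forall x, 0 < x < x2 -> Derive w x - r2 * (w x - k) = C * exp (r1 * x)).
  { intros x Hxr. assert (E := const_open V 0 x2 DV x (x2/2) Hxr ltac:(lra)).
    fold C in E. unfold V in E. rewrite <- E. rewrite Rmult_assoc, <- exp_plus.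
    replace (- r1 * x + r1 * x) with 0 by ring. rewrite exp_0; ring. }
  set (W2 := fun x => (w x - k) * exp (- r2 * x) - C / (r1 - r2) * exp ((r1 - r2) * x)).
  assert (DW : forall x, 0 < x < x2 -> is_derive W2 x 0).
  { intros x Hxr. unfold W2. auto_derive.
    - apply Hd1; lra.
    - change (Derive (fun x0 : R => w x0) x) with (Derive w x).
      assert (H1 := HV x Hxr).
      replace (Derive w x) with (r2 * (w x - k) + C * exp (r1 * x)) by lra.
      replace (exp ((r1 - r2) * x)) with (exp (r1 * x) * exp (- r2 * x)) by (rewrite <- exp_plus; f_equal; ring).
      field. lra. }
  exists (C / (r1 - r2)), (W2 (x2 / 2)).
  intros x Hxr. assert (E := const_open W2 0 x2 DW x (x2/2) Hxr ltac:(lra)).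
  rewrite <- E. unfold W2.
  assert (X1 : exp (- r2 * x) * exp (r2 * x) = 1) by (rewrite <- exp_plus; replace (- r2 * x + r2 * x) with 0 by ring; apply exp_0).
  assert (X2 : exp ((r1 - r2) * x) * exp (r2 * x) = exp (r1 * x)) by (rewrite <- exp_plus; f_equal; ring).
  fold k.
  replace ((w x - k) * exp (- r2 * x) - C / (r1 - r2) * exp ((r1 - r2) * x))
    with ((w x - k) * exp (- r2 * x) - C / (r1 - r2) * exp ((r1 - r2) * x)) by reflexivity.
  transitivity (k + (w x - k) * (exp (- r2 * x) * exp (r2 * x))); [rewrite X1; ring|].
  rewrite <- X2. ring.
Qed.

Lemma rep d a h q x2 w : 0 < d -> 0 < a -> 0 < q -> 0 < x2 ->
  is_pos_sol d a h q x2 w ->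
  (forall x, 0 <= x <= x2 -> w x = Fs d a h q x2 x) /\
  (forall x, 0 <= x <= x2 -> Derive w x = Fs1 d a h q x2 x).
Proof.
  intros Hd Ha Hq Hx Hsol.
  destruct (rep_open d a h q x2 w Hd Ha Hq Hx Hsol) as [A0 [B0 HW]].
  destruct Hsol as [Hd1 [Hd2 [Hode [HB0 [HB1 Hpos]]]]].
  destruct (roots d a q) as [S [P [R1 R2]]]; auto.
  set (e := fun x => w x - (h / q + A0 * exp (rr1 d a q * x) + B0 * exp (rr2 d a q * x))).
  assert (Key : forall p, 0 <= p <= x2 -> w p = h / q + A0 * exp (rr1 d a q * p) + B0 * exp (rr2 d a q * p) /\
             Derive w p = A0 * rr1 d a q * exp (rr1 d a q * p) + B0 * rr2 d a q * exp (rr2 d a q * p)).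
  { intros p Hp.
    assert (Hex : ex_derive e p) by (unfold e; auto_derive; auto).
    assert (Hz : e p = 0 /\ Derive e p = 0).
    { destruct (Rlt_dec p x2) as [Hlt|Hge].
      - apply (zero_side e p 1 (x2 - p)); auto; try lra.
        intros hh Hhh. unfold e. rewrite HW; [ring|lra].
      - apply (zero_side e p (-1) x2); auto; try lra.
        intros hh Hhh. unfold e. rewrite HW; [ring|lra]. }
    destruct Hz as [Hz1 Hz2].
    assert (De : is_derive e p (Derive w p - (A0 * rr1 d a q * exp (rr1 d a q * p) + B0 * rr2 d a q * exp (rr2 d a q * p)))).
    { unfold e. auto_derive.
      - apply Hd1; auto.
      - change (Derive (fun x0 : R => w x0) p) with (Derive w p). ring. }
    rewrite (is_derive_unique _ _ _ De) in Hz2.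
    unfold e in Hz1. split; lra. }
  assert (K0 := Key 0 ltac:(lra)). assert (K1 := Key x2 ltac:(lra)).
  destruct K0 as [W0 D0]. destruct K1 as [W1 D1].
  rewrite W0, D0 in HB0. rewrite W1, D1 in HB1.
  rewrite !Rmult_0_r, !exp_0, !Rmult_1_r in HB0.
  destruct (uniq_gen d a (h / q) (rr1 d a q) (rr2 d a q) x2 A0 B0) as [EA EB]; auto.
  assert (EA' : A0 = Ac d a h q x2) by (rewrite EA; reflexivity).
  assert (EB' : B0 = Bc d a h q x2) by (rewrite EB; reflexivity).
  split; intros x Hxr; destruct (Key x Hxr) as [K1 K2]; unfold Fs, Fs1; rewrite <- EA', <- EB'; auto.
Qed.

Lemma isd_minus (f g : R -> R) x df dg : is_derive f x df -> is_derive g x dg ->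
  is_derive (fun t => f t - g t) x (df - dg).
Proof. intros H1 H2. apply (is_derive_minus f g); auto. Qed.

Lemma isd_scal (f : R -> R) c x df : is_derive f x df ->
  is_derive (fun t => c * f t) x (c * df).
Proof. intros H. apply (is_derive_scal f); auto. Qed.

Lemma isd_const (k x : R) : is_derive (fun _ : R => k) x 0.
Proof. auto_derive; auto. Qed.

Lemma Fs_sol d a h q x2 : 0 < d -> 0 < a -> 0 < h -> 0 < q -> 0 < x2 ->
  is_pos_sol d a h q x2 (Fs d a h q x2).
Proof.
  intros Hd Ha Hh Hq Hx.
  destruct (Fs_facts d a h q x2) as [_ [_ [BC0 [BC1 _]]]]; auto.
  assert (DF := Fs_der d a h q x2). assert (DF1 := Fs1_der d a h q x2).
  assert (E1 : forall t, Derive (Fs d a h q x2) t = Fs1 d a h q x2 t) by (intro t; apply is_derive_unique, DF).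
  assert (E2 : forall t, Derive (Derive (Fs d a h q x2)) t = Fs2 d a h q x2 t).
  { intro t. rewrite (Derive_ext _ _ t E1). apply is_derive_unique, DF1. }
  repeat split.
  - intros x _. exists (Fs1 d a h q x2 x); auto.
  - intros x _. apply (ex_derive_ext (Fs1 d a h q x2)); [intro t; symmetry; apply E1|].
    exists (Fs2 d a h q x2 x); auto.
  - intros x _. rewrite E2, E1. apply Fs_ode; auto.
  - rewrite E1; auto.
  - rewrite E1; auto.
  - intros x Hxr. destruct (Fs_bounds d a h q x2 Hd Ha Hh Hq Hx x Hxr) as [L _].
    assert (0 < h / q * exp (- (a / d * x2))).
    { apply Rmult_lt_0_compat; [apply Rdiv_lt_0_compat; auto| apply exp_pos]. }
    lra.
Qed.

Lemma comp d a ha qa hb qb x2 : 0 < d -> 0 < a -> 0 < ha -> 0 < qa -> 0 < hb -> 0 < qb -> 0 < x2 ->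
  hb <= ha -> qa <= qb -> (hb < ha \/ qa < qb) ->
  forall x, 0 <= x <= x2 -> Fs d a hb qb x2 x < Fs d a ha qa x2 x.
Proof.
  intros Hd Ha Hha Hqa Hhb Hqb Hx Hh Hq Hor.
  destruct (Fs_facts d a ha qa x2) as [_ [_ [BCa0 [BCa1 _]]]]; auto.
  destruct (Fs_facts d a hb qb x2) as [_ [_ [BCb0 [BCb1 _]]]]; auto.
  set (Fa := Fs d a ha qa x2) in *. set (Fb := Fs d a hb qb x2) in *.
  set (Fa1 := Fs1 d a ha qa x2) in *. set (Fb1 := Fs1 d a hb qb x2) in *.
  set (Fa2 := Fs2 d a ha qa x2) in *. set (Fb2 := Fs2 d a hb qb x2) in *.
  assert (DFa : forall x, is_derive Fa x (Fa1 x)) by apply Fs_der.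
  assert (DFb : forall x, is_derive Fb x (Fb1 x)) by apply Fs_der.
  assert (DFa1 : forall x, is_derive Fa1 x (Fa2 x)) by apply Fs1_der.
  assert (DFb1 : forall x, is_derive Fb1 x (Fb2 x)) by apply Fs1_der.
  assert (Oa : forall x, d * Fa2 x - a * Fa1 x + ha - qa * Fa x = 0) by (intro; apply Fs_ode; auto).
  assert (Ob : forall x, d * Fb2 x - a * Fb1 x + hb - qb * Fb x = 0) by (intro; apply Fs_ode; auto).
  assert (Pb : forall x, 0 <= x <= x2 -> 0 < Fb x).
  { intros x Hxr. destruct (Fs_bounds d a hb qb x2 Hd Ha Hhb Hqb Hx x Hxr) as [L _].
    assert (0 < hb / qb * exp (- (a / d * x2))).
    { apply Rmult_lt_0_compat; [apply Rdiv_lt_0_compat; auto| apply exp_pos]. }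
    fold Fb in L. lra. }
  set (U := fun x => Fa x - Fb x). set (U1 := fun x => Fa1 x - Fb1 x).
  set (c := - (a / d)).
  set (Z := fun x => exp (c * x) * U x).
  set (Zd := fun x => exp (c * x) * c * U x + exp (c * x) * U1 x).
  set (G := fun x => d * U1 x - a * U x).
  set (Gd := fun x => (qa * Fa x - ha) - (qb * Fb x - hb)).
  assert (HU : forall x, is_derive U x (U1 x)) by (intro; apply isd_minus; auto).
  assert (HZ : forall x, is_derive Z x (Zd x)) by (intro; apply der_expmul; auto).
  assert (HG : forall x, is_derive G x (Gd x)).
  { intro x. assert (H : is_derive G x (d * (Fa2 x - Fb2 x) - a * U1 x)).
    { apply isd_minus; apply isd_scal; [apply isd_minus; auto| auto]. }
    replace (Gd x) with (d * (Fa2 x - Fb2 x) - a * U1 x); auto.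
    unfold Gd, U1. specialize (Oa x). specialize (Ob x). lra. }
  assert (HGc : forall x, continuity_pt Gd x).
  { intro x. apply (cont_of Gd x (qa * Fa1 x - qb * Fb1 x)).
    unfold Gd.
    assert (H : is_derive (fun t => (qa * Fa t - ha) - (qb * Fb t - hb)) x ((qa * Fa1 x - 0) - (qb * Fb1 x - 0))).
    { apply isd_minus; apply isd_minus; try apply isd_scal; auto; apply isd_const. }
    replace (qa * Fa1 x - qb * Fb1 x) with ((qa * Fa1 x - 0) - (qb * Fb1 x - 0)) by ring. exact H. }
  assert (Hsg : forall x, (G x < 0 -> Zd x < 0) /\ (0 < G x -> 0 < Zd x)).
  { intro x. assert (Ep := exp_pos (c * x)).
    assert (EZ : Zd x = exp (c * x) / d * G x) by (unfold Zd, G, c; field; lra).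
    assert (0 < exp (c * x) / d) by (apply Rdiv_lt_0_compat; auto).
    rewrite EZ. split; intro; nra. }
  assert (HG0 : G 0 = 0) by (unfold G, U, U1; lra).
  assert (HG1 : G x2 = 0) by (unfold G, U, U1; lra).
  assert (Hneg : forall x, 0 <= x <= x2 -> Z x <= 0 -> Gd x < 0).
  { intros x Hxr HZx. unfold Z in HZx.
    assert (Ep := exp_pos (c * x)).
    assert (Ux : U x <= 0).
    { destruct (Rle_dec (U x) 0); auto. assert (0 < exp (c * x) * U x) by (apply Rmult_lt_0_compat; lra). lra. }
    unfold U in Ux. unfold Gd. specialize (Pb x Hxr).
    destruct Hor as [Ho|Ho]; nra. }
  intros x Hxr.
  assert (Hz := minprin Z Zd G Gd x2 Hx HZ HG HGc Hsg HG0 HG1 Hneg x Hxr).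
  unfold Z in Hz. assert (Ep := exp_pos (c * x)).
  assert (0 < U x).
  { destruct (Rlt_dec 0 (U x)); auto. assert (exp (c * x) * U x <= 0).
    { nra. } lra. }
  unfold U in H. lra.
Qed.

Lemma lt_div_help h q c eps : 0 < q -> 0 < c -> 0 < h -> h * c < eps * q -> h / q * c < eps.
Proof.
  intros Hq Hc Hh H. replace (h / q * c) with ((h * c) / q) by (field; lra).
  apply Rmult_lt_reg_r with q; auto. unfold Rdiv. rewrite Rmult_assoc, Rinv_l; lra.
Qed.

Lemma gt_div_help h q c M : 0 < q -> 0 < c -> 0 < h -> M * q < h * c -> M < h / q * c.
Proof.
  intros Hq Hc Hh H. replace (h / q * c) with ((h * c) / q) by (field; lra).
  apply Rmult_lt_reg_r with q; auto. unfold Rdiv. rewrite Rmult_assoc, Rinv_l; lra.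
Qed.

Theorem lemma3p3 (d2 a2 x2 L : R) :
  0 < d2 -> 0 < a2 -> 0 < x2 -> x2 <= L ->
  (forall h q, 0 < h -> 0 < q ->
     (exists w, is_pos_sol d2 a2 h q x2 w) /\
     (forall w1 w2, is_pos_sol d2 a2 h q x2 w1 -> is_pos_sol d2 a2 h q x2 w2 ->
        forall x, 0 <= x <= x2 -> w1 x = w2 x)) /\
  (forall h q w, 0 < h -> 0 < q -> is_pos_sol d2 a2 h q x2 w ->
     forall x, 0 < x < x2 -> 0 < Derive w x < a2 / d2 * w x) /\
  (forall h1 h2 q w1 w2, 0 < h1 -> h1 < h2 -> 0 < q ->
     is_pos_sol d2 a2 h1 q x2 w1 -> is_pos_sol d2 a2 h2 q x2 w2 ->
     forall x, 0 < x < x2 -> w1 x < w2 x) /\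
  (forall q, 0 < q ->
     (forall eps, 0 < eps -> exists delta, 0 < delta /\
        forall h w, 0 < h < delta -> is_pos_sol d2 a2 h q x2 w ->
          forall x, 0 <= x <= x2 -> Rabs (w x) < eps) /\
     (forall M, exists H, 0 < H /\
        forall h w, H < h -> is_pos_sol d2 a2 h q x2 w ->
          forall x, 0 <= x <= x2 -> M < w x)) /\
  (forall h q1 q2 w1 w2, 0 < h -> 0 < q1 -> q1 < q2 ->
     is_pos_sol d2 a2 h q1 x2 w1 -> is_pos_sol d2 a2 h q2 x2 w2 ->
     forall x, 0 < x < x2 -> w2 x < w1 x) /\
  (forall h, 0 < h ->
     (forall M, exists delta, 0 < delta /\
        forall q w, 0 < q < delta -> is_pos_sol d2 a2 h q x2 w ->
          forall x, 0 <= x <= x2 -> M < w x) /\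
     (forall eps, 0 < eps -> exists Q, 0 < Q /\
        forall q w, Q < q -> is_pos_sol d2 a2 h q x2 w ->
          forall x, 0 <= x <= x2 -> Rabs (w x) < eps)).
Proof.
  intros Hd Ha Hx _.
  set (Ep := exp (a2 / d2 * x2)). set (Em := exp (- (a2 / d2 * x2))).
  assert (HEp : 0 < Ep) by apply exp_pos. assert (HEm : 0 < Em) by apply exp_pos.
  assert (Bnd : forall h q w, 0 < h -> 0 < q -> is_pos_sol d2 a2 h q x2 w ->
     forall x, 0 <= x <= x2 -> h / q * Em < w x < h / q * Ep).
  { intros h q w Hh Hq Hw x Hxr. destruct (rep d2 a2 h q x2 w Hd Ha Hq Hx Hw) as [R _].
    rewrite R; auto. apply Fs_bounds; auto. }
  split; [|split; [|split; [|split; [|split]]]].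
  - intros h q Hh Hq. split.
    + exists (Fs d2 a2 h q x2). apply Fs_sol; auto.
    + intros w1 w2 H1 H2 x Hxr.
      destruct (rep d2 a2 h q x2 w1 Hd Ha Hq Hx H1) as [R1 _].
      destruct (rep d2 a2 h q x2 w2 Hd Ha Hq Hx H2) as [R2 _].
      rewrite R1, R2; auto.
  - intros h q w Hh Hq Hw x Hxr.
    destruct (rep d2 a2 h q x2 w Hd Ha Hq Hx Hw) as [R1 R2].
    destruct (Fs_facts d2 a2 h q x2) as [_ [_ [_ [_ [F1p [_ Gn]]]]]]; auto.
    rewrite R1, R2 by lra. split; auto.
    specialize (Gn x Hxr).
    apply Rmult_lt_reg_l with d2; auto. replace (d2 * (a2 / d2 * Fs d2 a2 h q x2 x)) with (a2 * Fs d2 a2 h q x2 x) by (field; lra).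
    lra.
  - intros h1 h2 q w1 w2 Hh1 Hh Hq H1 H2 x Hxr.
    destruct (rep d2 a2 h1 q x2 w1 Hd Ha Hq Hx H1) as [R1 _].
    destruct (rep d2 a2 h2 q x2 w2 Hd Ha Hq Hx H2) as [R2 _].
    rewrite R1, R2 by lra. apply comp; auto; lra.
  - intros q Hq. split.
    + intros eps Heps. exists (eps * q * Em). split; [apply Rmult_lt_0_compat; [nra|auto]|].
      intros h w Hh Hw x Hxr. destruct (Bnd h q w ltac:(lra) Hq Hw x Hxr) as [Lo Up].
      assert (0 < h / q * Em) by (apply Rmult_lt_0_compat; [apply Rdiv_lt_0_compat|]; lra).
      rewrite Rabs_right by lra.
      assert (h / q * Ep < eps).
      { apply lt_div_help; try lra.
        assert (EE : Em * Ep = 1).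
        { unfold Em, Ep. rewrite <- exp_plus. replace (- (a2 / d2 * x2) + a2 / d2 * x2) with 0 by ring. apply exp_0. }
        assert (HH : h * Ep < eps * q * Em * Ep) by (apply Rmult_lt_compat_r; lra).
        rewrite (Rmult_assoc (eps * q)), EE in HH. lra. }
      lra.
    + intros M. exists ((Rabs M + 1) * q * Ep). split.
      { apply Rmult_lt_0_compat; [apply Rmult_lt_0_compat|]; auto. assert (0 <= Rabs M) by apply Rabs_pos. lra. }
      intros h w Hh Hw x Hxr.
      assert (0 < h). { assert (0 < (Rabs M + 1) * q * Ep). { apply Rmult_lt_0_compat; [apply Rmult_lt_0_compat|]; auto. assert (0 <= Rabs M) by apply Rabs_pos. lra. } lra. }
      destruct (Bnd h q w H Hq Hw x Hxr) as [Lo Up].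
      assert (M < h / q * Em).
      { apply gt_div_help; auto.
        assert (EE : Em * Ep = 1).
        { unfold Em, Ep. rewrite <- exp_plus. replace (- (a2 / d2 * x2) + a2 / d2 * x2) with 0 by ring. apply exp_0. }
        assert (HH : (Rabs M + 1) * q * Ep * Em < h * Em) by (apply Rmult_lt_compat_r; lra).
        rewrite (Rmult_assoc ((Rabs M + 1) * q)), (Rmult_comm Ep), EE in HH.
        assert (M <= Rabs M) by apply RRle_abs. nra. }
      lra.
  - intros h q1 q2 w1 w2 Hh Hq1 Hq H1 H2 x Hxr.
    destruct (rep d2 a2 h q1 x2 w1 Hd Ha Hq1 Hx H1) as [R1 _].
    destruct (rep d2 a2 h q2 x2 w2 Hd Ha ltac:(lra) Hx H2) as [R2 _].
    rewrite R1, R2 by lra. apply comp; auto; lra.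
  - intros h Hh. split.
    + intros M. exists (h * Em / (Rabs M + 1)).
      assert (HM : 0 < Rabs M + 1) by (assert (0 <= Rabs M) by apply Rabs_pos; lra).
      split; [apply Rdiv_lt_0_compat; auto; nra|].
      intros q w Hq Hw x Hxr. destruct (Bnd h q w Hh ltac:(lra) Hw x Hxr) as [Lo Up].
      assert (M < h / q * Em).
      { apply gt_div_help; try lra.
        assert (q * (Rabs M + 1) < h * Em).
        { destruct Hq as [Hq0 Hq1].
          apply Rmult_lt_compat_r with (r := Rabs M + 1) in Hq1; auto.
          replace (h * Em / (Rabs M + 1) * (Rabs M + 1)) with (h * Em) in Hq1 by (field; lra). lra. }
        assert (M <= Rabs M) by apply RRle_abs. destruct Hq. nra. }
      lra.
    + intros eps Heps. exists (h * Ep / eps). split; [apply Rdiv_lt_0_compat; nra|].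
      intros q w Hq Hw x Hxr.
      assert (Hq0 : 0 < q) by (assert (0 < h * Ep / eps) by (apply Rdiv_lt_0_compat; nra); lra).
      destruct (Bnd h q w Hh Hq0 Hw x Hxr) as [Lo Up].
      assert (0 < h / q * Em) by (apply Rmult_lt_0_compat; [apply Rdiv_lt_0_compat|]; lra).
      rewrite Rabs_right by lra.
      assert (h / q * Ep < eps).
      { apply lt_div_help; try lra.
        apply Rmult_lt_compat_r with (r := eps) in Hq; auto.
        replace (h * Ep / eps * eps) with (h * Ep) in Hq by (field; lra). lra. }
      lra.
Qed.
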